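(* Consider the AdaDROPS scheme described in the context (with either Option I or Option II as the support-update rule), and let $\bar{\mathcal{I}}\subseteq\{1,\dots,N\}$ be the set at which the nondecreasing sequence $\mathcal{I}^{(k)}$ eventually stabilizes. Assume the iterates $x^{(k)}$ converge to a point $\tilde{x}$ which is a minimizer of the restricted problem $$\min_{x\in\mathbb{R}^n}\ \frac{1}{2\lambda}\|AP_{\bar T}x-y\|^2+\|LP_{\bar T}x\|_{1,2}$$ and satisfies $\tilde{x}_i=0$ for all $i\notin\bar{\mathcal{E}}$. Then $\tilde{x}$ is a global minimizer of the original problem $$\min_{x\in\mathbb{R}^n}\ \frac{1}{2\lambda}\|Ax-y\|^2+\|Lx\|_{1,2}.$$
   Context: Let $n,N\in\mathbb{N}$, let $G_1,\dots,G_N\subseteq\{1,\dots,n\}$ be nonempty groups, possibly overlapping, with $\bigcup_iG_i=\{1,\dots,n\}$, and weights $w_i>0$. $x_G$ denotes the subvector of $x$ indexed by $G$ (increasing order). Let $p=\sum_i|G_i|$, partition $\{1,\dots,p\}$ into consecutive blocks $J_i=\{\sum_{j<i}|G_j|+1,\dots,\sum_{j\le i}|G_j|\}$, and define the lifting operator $L\in\mathbb{R}^{p\times n}$ by $(Lx)_{J_i}=w_ix_{G_i}$; for $z\in\mathbb{R}^p$, $\|z\|_{1,2}=\sum_i\|z_{J_i}\|$ (Euclidean norms). Let $A\in\mathbb{R}^{m\times n}$, $y\in\mathbb{R}^m$, $\lambda>0$. For an index set $\mathcal{I}\subseteq\{1,\dots,N\}$ define $\mathcal{E}(\mathcal{I})=\{1,\dots,n\}\setminus\bigcup_{t\notin\mathcal{I}}G_t$,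 $T(\mathcal{I})=\{x\in\mathbb{R}^n:\mathrm{supp}(x)\subseteq\mathcal{E}(\mathcal{I})\}$, $\mathcal{E}_z(\mathcal{I})=\bigcup_{t\in\mathcal{I}}J_t$, $T_z(\mathcal{I})=\{z\in\mathbb{R}^p:\mathrm{supp}(z)\subseteq\mathcal{E}_z(\mathcal{I})\}$, and $\widehat{L}(\mathcal{I})=L-P_{T_z(\mathcal{I})}LP_{T(\mathcal{I})^\perp}$, where $P_T$ is the orthogonal (coordinate) projection onto $T$ and $T^\perp$ its orthogonal complement; $\widehat{L}(\mathcal{I})^\top\widehat{L}(\mathcal{I})$ is invertible. AdaDROPS scheme: starting from some $\mathcal{I}^{(0)}$ and $x^{(0)}$, at step $k$ an inner solver produces $x^{(k+1)}$ (for the problem restricted to $T(\mathcal{I}^{(k)})$, i.e. with $A,L$ replaced by $AP_{T(\mathcal{I}^{(k)})},LP_{T(\mathcal{I}^{(k)})}$); then with $\beta^{(k+1)}=-\frac1\lambda A^\top(Ax^{(k+1)}-y)$ the index set is updated by Option I: $\mathcal{I}^{(k+1)}=\mathcal{I}^{(k)}\cup\{t:\|\beta^{(k+1)}_{G_t}\|\ge w_t\}$, or Option II: with $u^{(k+1)}=\widehat{L}(\mathcal{I}^{(k)})(\widehat{L}(\mathcal{I}^{(k)})^\top\widehat{L}(\mathcal{I}^{(k)}))^{-1}\beta^{(k+1)}$, $\mathcal{I}^{(k+1)}=\mathcal{I}^{(k)}\cup\{t:\|u^{(k+1)}_{J_t}\|\ge 1\}$. Since $\mathcal{I}^{(k)}$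 is nondecreasing in a finite set it stabilizes at some $\bar{\mathcal{I}}$; write $\bar{\mathcal{E}}=\mathcal{E}(\bar{\mathcal{I}})$ and $\bar T=T(\bar{\mathcal{I}})$. *)

(* Defs.v *)
From HB Require Import structures.
From mathcomp Require Import all_boot all_order all_algebra.
From mathcomp Require Import all_classical all_reals all_analysis.
Set Implicit Arguments. Unset Strict Implicit. Unset Printing Implicit Defensive.
Import Order.TTheory GRing.Theory Num.Theory.
Local Open Scope ring_scope.

(* Groups G : 'I_N -> {set 'I_n}; indices are 0-based. *)

Definition lift_dim (n N : nat) (G : 'I_N -> {set 'I_n}) : nat :=
  (\sum_(t < N) #|G t|)%N.

Definition blk_start (n N : nat) (G : 'I_N -> {set 'I_n}) (t : 'I_N) : nat :=
  (\sum_(i < N | (i < t)%N) #|G i|)%N.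

Definition inJ (n N : nat) (G : 'I_N -> {set 'I_n}) (t : 'I_N) (k : nat) : bool :=
  (blk_start G t <= k < blk_start G t + #|G t|)%N.

(* the r-th (0-based) element of G_t in increasing order *)
Definition grp_elt (n N : nat) (G : 'I_N -> {set 'I_n}) (t : 'I_N) (r : nat) : nat :=
  nth 0%N (map val (enum (G t))) r.

(* lifting operator L : (Lx)_{J_t} = w_t x_{G_t} *)
Definition liftL (R : nzRingType) (n N : nat) (G : 'I_N -> {set 'I_n})
  (w : 'I_N -> R) : 'M[R]_(lift_dim G, n) :=
  \matrix_(k, j) \sum_(t < N)
     (if inJ G t k && (grp_elt G t (k - blk_start G t) == j)%N then w t else 0).

Definition blk_norm (R : rcfType) (n N : nat) (G : 'I_N -> {set 'I_n})
  (z : 'cV[R]_(lift_dim G)) (t : 'I_N) : R :=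
  Num.sqrt (\sum_(k < lift_dim G | inJ G t k) z k 0 ^+ 2).

Definition norm12 (R : rcfType) (n N : nat) (G : 'I_N -> {set 'I_n})
  (z : 'cV[R]_(lift_dim G)) : R := \sum_(t < N) blk_norm z t.

Definition sqnorm (R : nzRingType) (m : nat) (v : 'cV[R]_m) : R :=
  \sum_(i < m) v i 0 ^+ 2.

Definition grp_norm (R : rcfType) (n N : nat) (G : 'I_N -> {set 'I_n})
  (v : 'cV[R]_n) (t : 'I_N) : R :=
  Num.sqrt (\sum_(j in G t) v j 0 ^+ 2).

Definition objective (R : rcfType) (m n N : nat) (G : 'I_N -> {set 'I_n})
  (B : 'M[R]_(m, n)) (M : 'M[R]_(lift_dim G, n)) (y : 'cV[R]_m) (lam : R)
  (x : 'cV[R]_n) : R :=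
  (2 * lam)^-1 * sqnorm (B *m x - y) + norm12 (M *m x).

Definition suppE (n N : nat) (G : 'I_N -> {set 'I_n}) (I : {set 'I_N}) : {set 'I_n} :=
  ~: \bigcup_(t | t \notin I) G t.

Definition projT (R : nzRingType) (n N : nat) (G : 'I_N -> {set 'I_n}) (I : {set 'I_N})
  : 'M[R]_n :=
  diag_mx (\row_j (if j \in suppE G I then 1 else 0)).

Definition projTz (R : nzRingType) (n N : nat) (G : 'I_N -> {set 'I_n}) (I : {set 'I_N})
  : 'M[R]_(lift_dim G) :=
  diag_mx (\row_k (if [exists t in I, inJ G t k] then 1 else 0)).

Definition Lhat (R : nzRingType) (n N : nat) (G : 'I_N -> {set 'I_n}) (w : 'I_N -> R)
  (I : {set 'I_N}) : 'M[R]_(lift_dim G, n) :=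
  liftL G w - projTz R G I *m liftL G w *m (1%:M - projT R G I).

Definition beta (R : fieldType) (m n : nat) (A : 'M[R]_(m, n)) (y : 'cV[R]_m) (lam : R)
  (x : 'cV[R]_n) : 'cV[R]_n :=
  - (lam^-1 *: (A^T *m (A *m x - y))).

Definition update1 (R : rcfType) (m n N : nat) (G : 'I_N -> {set 'I_n}) (w : 'I_N -> R)
  (A : 'M[R]_(m, n)) (y : 'cV[R]_m) (lam : R) (I : {set 'I_N}) (x : 'cV[R]_n)
  : {set 'I_N} :=
  I :|: [set t | w t <= grp_norm G (beta A y lam x) t].

Definition uvec (R : rcfType) (m n N : nat) (G : 'I_N -> {set 'I_n}) (w : 'I_N -> R)
  (A : 'M[R]_(m, n)) (y : 'cV[R]_m) (lam : R) (I : {set 'I_N}) (x : 'cV[R]_n)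
  : 'cV[R]_(lift_dim G) :=
  Lhat G w I *m invmx ((Lhat G w I)^T *m Lhat G w I) *m beta A y lam x.

Definition update2 (R : rcfType) (m n N : nat) (G : 'I_N -> {set 'I_n}) (w : 'I_N -> R)
  (A : 'M[R]_(m, n)) (y : 'cV[R]_m) (lam : R) (I : {set 'I_N}) (x : 'cV[R]_n)
  : {set 'I_N} :=
  I :|: [set t | 1 <= blk_norm (uvec G w A y lam I x) t].

(* Main.v *)
Require Import Defs.
From HB Require Import structures.
From mathcomp Require Import all_boot all_order all_algebra.
From mathcomp Require Import all_classical all_reals all_analysis.
From mathcomp Require Import zify ring lra.
Unset Printing Implicit Defensive.
Import Order.TTheory GRing.Theory Num.Theory.
Import numFieldNormedType.Exports.
Local Open Scope ring_scope.

Section Blocks.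
Variables (R : rcfType) (n N : nat) (G : 'I_N -> {set 'I_n}) (w : 'I_N -> R).

Lemma start_le (s t : 'I_N) : (s < t)%N -> (blk_start G s + #|G s| <= blk_start G t)%N.
Proof.
move=> st; rewrite /blk_start.
have -> : (\sum_(i < N | (i < s)%N) #|G i| + #|G s| = \sum_(i < N | (i < s.+1)%N) #|G i|)%N.
  rewrite [in RHS](bigD1 s) //= addnC; congr (_ + _)%N.
  by apply: eq_bigl => i; rewrite -val_eqE /= ltnS ltn_neqAle andbC.
rewrite [X in (X <= _)%N]big_mkcond [X in (_ <= X)%N]big_mkcond /=.
apply: leq_sum => i _; case: ifP => // H; rewrite ifT //; apply: leq_trans H st.
Qed.

Lemma start_end (t : 'I_N) : (blk_start G t + #|G t| <= lift_dim G)%N.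
Proof.
rewrite /blk_start /lift_dim.
have -> : (\sum_(i < N | (i < t)%N) #|G i| + #|G t| = \sum_(i < N | (i < t.+1)%N) #|G i|)%N.
  rewrite [in RHS](bigD1 t) //= addnC; congr (_ + _)%N.
  by apply: eq_bigl => i; rewrite -val_eqE /= ltnS ltn_neqAle andbC.
rewrite [X in (X <= _)%N]big_mkcond /=.
apply: leq_sum => i _; case: ifP => //.
Qed.

Lemma inJ_uniq (s t : 'I_N) k : inJ G s k -> inJ G t k -> s = t.
Proof.
rewrite /inJ => /andP [h1 h2] /andP [h3 h4].
case: (ltngtP s t) => [st|ts|/val_inj //].
  have := start_le s t st; lia.
have := start_le t s ts; lia.
Qed.


Definition ge (j0 : 'I_n) (t : 'I_N) (r : nat) : 'I_n := nth j0 (enum (G t)) r.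

Lemma grp_elt_ge j0 t r : (r < #|G t|)%N -> grp_elt G t r = ge j0 t r.
Proof. by move=> h; rewrite /grp_elt (nth_map j0) // -cardE. Qed.

Lemma L_entry j0 t (k : 'I_(lift_dim G)) j : inJ G t k ->
  liftL G w k j = if ge j0 t (k - blk_start G t) == j then w t else 0.
Proof.
move=> Hk; rewrite mxE (bigD1 t) //= Hk /= big1 ?addr0.
  rewrite (grp_elt_ge j0) //; move: Hk; rewrite /inJ; lia.
move=> s Hs; case: ifP => // /andP [Hs' _].
by rewrite (inJ_uniq s t k Hs' Hk) eqxx in Hs.
Qed.

Lemma L_none (k : 'I_(lift_dim G)) j : (forall t, ~~ inJ G t k) -> liftL G w k j = 0.
Proof. by move=> H; rewrite mxE big1 // => t _; rewrite (negbTE (H t)). Qed.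

Lemma Lmul_entry j0 t (k : 'I_(lift_dim G)) (v : 'cV[R]_n) : inJ G t k ->
  (liftL G w *m v) k 0 = w t * v (ge j0 t (k - blk_start G t)) 0.
Proof.
move=> Hk; rewrite mxE (bigD1 (ge j0 t (k - blk_start G t))) //= (L_entry j0 t k) // eqxx.
by rewrite big1 ?addr0 // => j Hj; rewrite (L_entry j0 t k j Hk) eq_sym (negbTE Hj) mul0r.
Qed.

Lemma Lmul_none (k : 'I_(lift_dim G)) (v : 'cV[R]_n) : (forall t, ~~ inJ G t k) ->
  (liftL G w *m v) k 0 = 0.
Proof. by move=> H; rewrite mxE big1 // => j _; rewrite L_none // mul0r. Qed.

Lemma sum_block (F : nat -> R) t :
  \sum_(k < lift_dim G | inJ G t k) F k = \sum_(r < #|G t|) F (blk_start G t + r)%N.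
Proof.
rewrite -(big_mkord (fun k => inJ G t k) F).
have he := start_end t.
rewrite (big_cat_nat (n:=blk_start G t) (leq0n _) (leq_trans (leq_addr _ _) he)) /=.
rewrite (big_cat_nat (n:=(blk_start G t + #|G t|)%N) (leq_addr #|G t| (blk_start G t)) he) /=.
rewrite big_nat_cond big1 ?add0r; last first.
  by move=> k /andP [/andP [_ h] hJ]; move: hJ; rewrite /inJ => /andP [h1 h2]; exfalso; lia.
rewrite [X in _ + X]big_nat_cond [X in _ + X]big1 ?addr0; last first.
  by move=> k /andP [/andP [h _] hJ]; move: hJ; rewrite /inJ => /andP [h1 h2]; have := leq_ltn_trans h h2; rewrite ltnn.
rewrite big_nat_cond (eq_bigl (fun k => (blk_start G t <= k < blk_start G t + #|G t|)%N && true)); last first.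
  by move=> k; rewrite /inJ andbb andbT.
rewrite -big_nat_cond -{1}[blk_start G t]add0n big_addn addKn big_mkord.
by apply: eq_bigr => r _; rewrite addnC.
Qed.

Lemma sum_grp j0 t (f : 'I_n -> R) :
  \sum_(r < #|G t|) f (ge j0 t r) = \sum_(j in G t) f j.
Proof. by rewrite -(big_mkord xpredT (fun r => f (ge j0 t r))) cardE -big_enum (big_nth j0). Qed.

Lemma blk_L (j0 : 'I_n) (t : 'I_N) (v : 'cV[R]_n) : 0 <= w t ->
  blk_norm (liftL G w *m v) t = w t * grp_norm G v t.
Proof.
move=> hw; rewrite /blk_norm /grp_norm.
under eq_bigr => k Hk do rewrite (Lmul_entry j0 t k v Hk).
rewrite (sum_block (fun k : nat => (w t * v (ge j0 t (k - blk_start G t)) 0) ^+ 2)).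
under eq_bigr => r _ do rewrite addKn exprMn.
rewrite -mulr_sumr (sum_grp j0 t (fun j => v j 0 ^+ 2)).
by rewrite sqrtrM ?sqr_ge0 // sqrtr_sqr ger0_norm.
Qed.

End Blocks.
Section Norms.
Context {R : rcfType}.

Lemma CS (I : finType) (P : pred I) (a b : I -> R) :
  \sum_(i | P i) a i * b i <=
  Num.sqrt (\sum_(i | P i) a i ^+ 2) * Num.sqrt (\sum_(i | P i) b i ^+ 2).
Proof.
set S := \sum_(i | P i) a i * b i.
set A := \sum_(i | P i) a i ^+ 2.
set B := \sum_(i | P i) b i ^+ 2.
have A0 : 0 <= A by apply: sumr_ge0 => i _; exact: sqr_ge0.
have H : S ^+ 2 <= A * B.
  have h0 : 0 <= \sum_(i | P i) \sum_(j | P j) (a i * b j - a j * b i) ^+ 2.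
    by apply: sumr_ge0 => i _; apply: sumr_ge0 => j _; exact: sqr_ge0.
  have inner : forall i, \sum_(j | P j) (a i * b j - a j * b i) ^+ 2
      = a i ^+ 2 * B + A * b i ^+ 2 - 2 * (a i * b i * S).
    move=> i.
    transitivity (\sum_(j | P j) (a i ^+ 2 * b j ^+ 2 + a j ^+ 2 * b i ^+ 2
                                - 2 * (a i * b i * (a j * b j)))).
      by apply: eq_bigr => j _; ring.
    by rewrite sumrB big_split /= /A /B /S !mulr_sumr mulr_suml.
  rewrite (eq_bigr _ (fun i _ => inner i)) sumrB big_split /= in h0.
  rewrite -mulr_suml -mulr_sumr -mulr_sumr -mulr_suml -/A -/B -/S in h0.
  nra.
apply: le_trans (ler_norm S) _.
rewrite -sqrtr_sqr -sqrtrM //; exact: ler_wsqrtr H.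
Qed.

Arguments CS {I}.

Lemma sqrt_add_le (x y : R) : 0 <= x -> 0 <= y -> Num.sqrt (x + y) <= Num.sqrt x + Num.sqrt y.
Proof.
move=> x0 y0.
rewrite -(ler_pXn2r (n:=2)) ?nnegrE ?addr_ge0 ?sqrtr_ge0 //.
rewrite sqrrD !sqr_sqrtr ?addr_ge0 //.
have := sqrtr_ge0 x; have := sqrtr_ge0 y; nra.
Qed.

Definition gnorm (I : finType) (P : pred I) (a : I -> R) := Num.sqrt (\sum_(i | P i) a i ^+ 2).
Arguments gnorm {I}.

Lemma gnorm_triangle (I : finType) (P : pred I) (a b : I -> R) :
  gnorm P (fun i => a i + b i) <= gnorm P a + gnorm P b.
Proof.
rewrite /gnorm.
rewrite -(ler_pXn2r (n:=2)) ?nnegrE ?addr_ge0 ?sqrtr_ge0 //.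
rewrite sqrrD !sqr_sqrtr ?sumr_ge0 // => [|i _|i _|i _]; try exact: sqr_ge0.
under eq_bigr do rewrite sqrrD.
rewrite !big_split /= mulr2n.
have := CS P a b.
set S := \sum_(i | P i) a i * b i.
nra.
Qed.

Lemma gnorm_scale (I : finType) (P : pred I) (c : R) (a : I -> R) :
  gnorm P (fun i => c * a i) = `|c| * gnorm P a.
Proof.
rewrite /gnorm; under eq_bigr do rewrite exprMn.
by rewrite -mulr_sumr sqrtrM ?sqr_ge0 // sqrtr_sqr.
Qed.

End Norms.
Arguments gnorm {R I}.

Section Core.
Variables (R : rcfType) (m n N : nat) (G : 'I_N -> {set 'I_n}) (w : 'I_N -> R)
  (A : 'M[R]_(m, n)) (y : 'cV[R]_m) (lam : R) (I : {set 'I_N}).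
Hypothesis Hw : forall t, 0 < w t.
Hypothesis Hlam : 0 < lam.

Definition dot k (u v : 'cV[R]_k) := \sum_i u i 0 * v i 0.
Arguments dot {k}.

Lemma dotE k (u v : 'cV[R]_k) : dot u v = (u^T *m v) 0 0.
Proof. by rewrite /dot mxE; apply: eq_bigr => i _; rewrite mxE. Qed.

Lemma dotC k (u v : 'cV[R]_k) : dot u v = dot v u.
Proof. by apply: eq_bigr => i _; rewrite mulrC. Qed.

Lemma dotDr k (u v v' : 'cV[R]_k) : dot u (v + v') = dot u v + dot u v'.
Proof. by rewrite /dot -big_split; apply: eq_bigr => i _; rewrite mxE mulrDr. Qed.

Lemma dotZr k (u v : 'cV[R]_k) c : dot u (c *: v) = c * dot u v.
Proof. by rewrite /dot mulr_sumr; apply: eq_bigr => i _; rewrite mxE mulrCA. Qed.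

Lemma dotNr k (u v : 'cV[R]_k) : dot u (- v) = - dot u v.
Proof. by rewrite /dot -sumrN; apply: eq_bigr => i _; rewrite mxE mulrN. Qed.

Lemma dot_mulmx k l (B : 'M[R]_(k, l)) u v : dot (B *m u) v = dot u (B^T *m v).
Proof. by rewrite !dotE trmx_mul mulmxA. Qed.

Lemma sqnorm_dot k (v : 'cV[R]_k) : sqnorm v = dot v v.
Proof. by apply: eq_bigr => i _; rewrite expr2. Qed.

Lemma sqnorm_ge0 k (v : 'cV[R]_k) : 0 <= sqnorm v.
Proof. by apply: sumr_ge0 => i _; exact: sqr_ge0. Qed.

Lemma sqnormD k (u v : 'cV[R]_k) : sqnorm (u + v) = sqnorm u + 2 * dot u v + sqnorm v.
Proof.
rewrite /sqnorm /dot mulr_sumr -!big_split /=; apply: eq_bigr => i _; rewrite mxE; ring.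
Qed.

Lemma sqnormZ k (v : 'cV[R]_k) c : sqnorm (c *: v) = c ^+ 2 * sqnorm v.
Proof. by rewrite /sqnorm mulr_sumr; apply: eq_bigr => i _; rewrite mxE exprMn. Qed.

Definition hh x := (2 * lam)^-1 * sqnorm (A *m x - y).

Lemma hh_expand x e : hh (x + e) =
  hh x - dot (beta A y lam x) e + (2 * lam)^-1 * sqnorm (A *m e).
Proof.
rewrite /hh /beta mulmxDr addrAC sqnormD [dot (- _) e]dotC dotNr dotZr -dot_mulmx.
rewrite [dot (A *m x - y) _]dotC.
have l0 : lam != 0 by rewrite gt_eqF.
by field.
Qed.

Definition F x := hh x + \sum_t w t * grp_norm G x t.

Lemma obj_F (HGne : forall t, exists j, j \in G t) x : objective A (liftL G w) y lam x = F x.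
Proof.
rewrite /objective /F /norm12; congr (_ + _); apply: eq_bigr => t _.
have [j0 _] := HGne t; exact: blk_L j0 t x (ltW (Hw t)).
Qed.

Definition E := suppE G I.
Definition P := projT R G I.

Lemma Pmul (v : 'cV[R]_n) i : (P *m v) i 0 = if i \in E then v i 0 else 0.
Proof. by rewrite /P /projT mul_diag_mx !mxE; case: ifP => _; rewrite ?mul1r ?mul0r. Qed.

Lemma notE_of t j : t \notin I -> j \in G t -> j \notin E.
Proof. by move=> tI jG; rewrite /E /suppE finset.in_setC negbK; apply/bigcupP; exists t. Qed.

Lemma PP (v : 'cV[R]_n) : P *m (P *m v) = P *m v.
Proof. by apply/colP => i; rewrite !Pmul; case: (i \in E). Qed.

Lemma core xt (Hfix : P *m xt = xt)
  (Hmin : forall z, P *m z = z -> F xt <= F z)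
  (HC : forall d, P *m d = 0 -> dot (beta A y lam xt) d <=
        \sum_t (if t \in I then 0 else w t * grp_norm G d t)) x :
  F xt <= F x.
Proof.
set b := beta A y lam xt.
set x1 := P *m x. set d2 := x - x1. set e1 := x1 - xt.
have Pd2 : P *m d2 = 0 by rewrite /d2 mulmxBr PP subrr.
have Pe1 : P *m e1 = e1 by rewrite /e1 mulmxBr PP Hfix.
set Phi := - dot b e1 + \sum_t w t * (grp_norm G x1 t - grp_norm G xt t).
have stepA : 0 <= Phi.
  set q := (2 * lam)^-1 * sqnorm (A *m e1).
  have q0 : 0 <= q by rewrite mulr_ge0 ?sqnorm_ge0 // invr_ge0 mulr_ge0 // ltW.
  have key : forall s, 0 < s -> s <= 1 -> 0 <= Phi + s * q.
    move=> s s0 s1.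
    have Pz : P *m (xt + s *: e1) = xt + s *: e1 by rewrite mulmxDr -scalemxAr Pe1 Hfix.
    have := Hmin _ Pz; rewrite /F hh_expand dotZr -scalemxAr sqnormZ.
    have gz : forall t, grp_norm G (xt + s *: e1) t <=
        (1 - s) * grp_norm G xt t + s * grp_norm G x1 t.
      move=> t.
      have -> : grp_norm G (xt + s *: e1) t =
          gnorm (fun j => j \in G t) (fun j => (1 - s) * xt j 0 + s * x1 j 0).
        rewrite /grp_norm /gnorm; congr (Num.sqrt _); apply: eq_bigr => j _.
        rewrite /e1 !mxE; congr (_ ^+ 2); ring.
      apply: le_trans (gnorm_triangle _ _ _ _) _.
      rewrite (gnorm_scale _ _ (1 - s) (fun j => xt j 0)).
      rewrite (gnorm_scale _ _ s (fun j => x1 j 0)).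
      rewrite !ger0_norm ?subr_ge0 ?(ltW s0) //.
    have sumz : \sum_t w t * grp_norm G (xt + s *: e1) t <=
        \sum_t w t * grp_norm G xt t + s * \sum_t w t * (grp_norm G x1 t - grp_norm G xt t).
      rewrite mulr_sumr -big_split /=; apply: ler_sum => t _.
      apply: le_trans (ler_wpM2l (ltW (Hw t)) (gz t)) _.
      by rewrite le_eqVlt; apply/orP; left; apply/eqP; ring.
    move=> Hm.
    have H2 : 0 <= s * (Phi + s * q).
      rewrite /Phi /q; move: Hm sumz; lra.
    by rewrite pmulr_rge0 in H2.
  case: (lerP 0 Phi) => // Hneg.
  set s := - Phi / (q - Phi).
  have qP : 0 < q - Phi by lra.
  have s0 : 0 < s by rewrite /s divr_gt0 // oppr_gt0.
  have s1 : s <= 1 by rewrite /s ler_pdivrMr // mul1r; lra.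
  have := key s s0 s1.
  have e : s * (q - Phi) = - Phi by rewrite /s mulfVK // gt_eqF.
  nra.
have x1j : forall j, x1 j 0 = if j \in E then x j 0 else 0 by move=> j; exact: Pmul.
clearbody x1.
have xdec : xt + (e1 + d2) = x by rewrite /e1 /d2; apply/colP => i; rewrite !mxE; ring.
have hx : hh xt - dot b e1 - dot b d2 <= hh x.
  rewrite -[in hh x]xdec hh_expand -/b (dotDr _ b e1 d2).
  have := sqnorm_ge0 _ (A *m (e1 + d2)).
  have : 0 < (2 * lam)^-1 by rewrite invr_gt0 mulr_gt0.
  nra.
have gx : forall t, w t * grp_norm G x1 t + (if t \in I then 0 else w t * grp_norm G d2 t)
    <= w t * grp_norm G x t.
  move=> t.
  have split : \sum_(j in G t) x j 0 ^+ 2 =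
      \sum_(j in G t) x1 j 0 ^+ 2 + \sum_(j in G t) d2 j 0 ^+ 2.
    rewrite -big_split /=; apply: eq_bigr => j _; rewrite /d2 !mxE x1j.
    by case: ifP => _; ring.
  rewrite /grp_norm split.
  have s1 : 0 <= \sum_(j in G t) x1 j 0 ^+ 2 by apply: sumr_ge0 => j _; exact: sqr_ge0.
  have s2 : 0 <= \sum_(j in G t) d2 j 0 ^+ 2 by apply: sumr_ge0 => j _; exact: sqr_ge0.
  case: ifP => tI.
    rewrite addr0; apply: ler_wpM2l; first exact: ltW.
    by apply: ler_wsqrtr; lra.
  have z1 : \sum_(j in G t) x1 j 0 ^+ 2 = 0.
    apply: big1 => j jG; rewrite x1j.
    by rewrite (negbTE (notE_of t j (negbT tI) jG)) expr0n.
  by rewrite z1 add0r sqrtr0 mulr0 add0r.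
have gsum : \sum_t w t * grp_norm G x1 t +
    \sum_t (if t \in I then 0 else w t * grp_norm G d2 t) <= \sum_t w t * grp_norm G x t.
  by rewrite -big_split /=; apply: ler_sum => t _; exact: gx.
have hc := HC d2 Pd2.
have ePhi : Phi = - dot b e1 + \sum_t w t * grp_norm G x1 t - \sum_t w t * grp_norm G xt t.
  by rewrite /Phi -addrA -sumrB; congr (_ + _); apply: eq_bigr => t _; rewrite mulrBr.
rewrite /F; move: stepA; rewrite ePhi; lra.
Qed.


Lemma HC1 (b : 'cV[R]_n) (Hb : forall t, t \notin I -> grp_norm G b t <= w t)
  (d : 'cV[R]_n) (Pd : P *m d = 0) :
  dot b d <= \sum_t (if t \in I then 0 else w t * grp_norm G d t).
Proof.
have dE : forall j, j \in E -> d j 0 = 0.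
  by move=> j jE; move/colP: Pd => /(_ j); rewrite Pmul jE mxE.
pose pk j := [pick t | (t \notin I) && (j \in G t)].
have step1 : dot b d = \sum_t \sum_j (if pk j == Some t then b j 0 * d j 0 else 0).
  rewrite exchange_big /dot; apply: eq_bigr => j _.
  rewrite /pk; case: pickP => [t0 /andP [t0I jG] | none].
    rewrite (bigD1 t0) //= eqxx big1 ?addr0 // => s st0.
    by case: eqP => // [[]] e; rewrite e eqxx in st0.
  have jE : j \in E.
    apply/negPn/negP => jnE.
    move: jnE; rewrite /E /suppE finset.in_setC negbK => /bigcupP [t tI jG].
    by have := none t; rewrite tI jG.
  by rewrite dE // mulr0 big1 // => t _; case: ifP.
rewrite step1; apply: ler_sum => t _.
have [tI|tI] := boolP (t \in I).
  rewrite big1 // => j _; case: ifP => //; rewrite /pk; case: pickP => // t0 /andP [t0I _].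
  by move=> /eqP [] e; rewrite e tI in t0I.
have -> : \sum_j (if pk j == Some t then b j 0 * d j 0 else 0) =
    \sum_(j in G t) b j 0 * (if pk j == Some t then d j 0 else 0).
  rewrite [RHS]big_mkcond /=; apply: eq_bigr => j _.
  case hp: (pk j == Some t); case jG: (j \in G t); rewrite ?mulr0 //.
  move: hp; rewrite /pk; case: pickP => // t0 /andP [_ jG0] /eqP [] e.
  by rewrite e jG in jG0.
apply: le_trans (CS _ _ _ _) _.
apply: ler_pM; rewrite ?sqrtr_ge0 //.
  exact: Hb tI.
apply: ler_wsqrtr; apply: ler_sum => j _; case: ifP => _ //.
by rewrite expr0n /= sqr_ge0.
Qed.


Lemma subE k (U V : 'cV[R]_k) i : (U - V) i 0 = U i 0 - V i 0.
Proof. by rewrite !mxE. Qed.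

Lemma Pz_mul (v : 'cV[R]_(lift_dim G)) k :
  (projTz R G I *m v) k 0 = if [exists s in I, inJ G s k] then v k 0 else 0.
Proof. by rewrite /projTz mul_diag_mx !mxE; case: ifP => _; rewrite ?mul1r ?mul0r. Qed.

Lemma pz_false t (k : nat) : inJ G t k -> t \notin I -> [exists s in I, inJ G s k] = false.
Proof.
move=> kt tI; apply/existsP => [[s /andP [sI sk]]].
by move: sI; rewrite (inJ_uniq _ _ _ s t k sk kt) (negbTE tI).
Qed.

Lemma pz_true t (k : nat) : inJ G t k -> t \in I -> [exists s in I, inJ G s k].
Proof. by move=> kt tI; apply/existsP; exists t; rewrite tI. Qed.

Lemma Lhat_mul (v : 'cV[R]_n) : Lhat G w I *m v =
  liftL G w *m v - projTz R G I *m (liftL G w *m ((1%:M - P) *m v)).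
Proof. by rewrite /Lhat mulmxBl -!mulmxA. Qed.

Lemma Lhat_unit (HGne : forall t, exists j, j \in G t)
  (HGcov : \bigcup_(t < N) G t = [set: 'I_n]) :
  (Lhat G w I)^T *m Lhat G w I \in unitmx.
Proof.
set Lh := Lhat G w I. set M := Lh^T *m Lh.
rewrite unitmxE unitfE; apply/negP => /det0P [v v0 vM].
set c := v^T.
have Mc : M *m c = 0.
  by have := congr1 trmx vM; rewrite trmx_mul /M trmx_mul trmxK trmx0.
have sq : sqnorm (Lh *m c) = 0.
  by rewrite sqnorm_dot dot_mulmx mulmxA -/M Mc /dot big1 // => i _; rewrite [X in _ * X]mxE mulr0.
have ent : forall k, (Lh *m c) k 0 = 0.
  move=> k; apply/eqP; rewrite -sqrf_eq0; apply/eqP.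
  exact: (psumr_eq0P (fun i _ => sqr_ge0 _) sq).
have c0 : c = 0.
  apply/colP => j; rewrite [RHS]mxE.
  have [t jG tc] : exists2 t, j \in G t & (j \in E) || (t \notin I).
    case jE: (j \in E).
      have : j \in \bigcup_(t < N) G t by rewrite HGcov inE.
      by move=> /bigcupP [t _ jG]; exists t.
    move/negbT: jE; rewrite /E /suppE finset.in_setC negbK => /bigcupP [t tI jG].
    by exists t => //; rewrite tI orbT.
  set r := index j (enum (G t)).
  have rlt : (r < #|G t|)%N by rewrite cardE index_mem mem_enum.
  have klt : (blk_start G t + r < lift_dim G)%N.
    by apply: leq_trans (start_end _ _ G t); rewrite ltn_add2l.
  pose k := Ordinal klt.
  have kJ : inJ G t k by rewrite /inJ /= leq_addr ltn_add2l.
  have ge_k : ge _ _ G j t (k - blk_start G t) = j by rewrite /= addKn /ge nth_index // mem_enum.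
  have := ent k; rewrite /Lh Lhat_mul subE Pz_mul.
  rewrite (Lmul_entry _ _ _ _ _ j t k c kJ) (Lmul_entry _ _ _ _ _ j t k _ kJ) ge_k.
  rewrite mulmxBl mul1mx subE Pmul.
  case/orP: tc => [jE | tI].
    rewrite jE subrr mulr0 if_same subr0 => /eqP; rewrite mulf_eq0 (gt_eqF (Hw t)) /=.
    by move/eqP.
  rewrite (pz_false t k kJ tI) subr0 => /eqP; rewrite mulf_eq0 (gt_eqF (Hw t)) /=.
  by move/eqP.
have : v = 0 by apply: trmx_inj; rewrite trmx0 -/c c0.
by move=> e; rewrite e eqxx in v0.
Qed.

Lemma uvec_eq (HU : (Lhat G w I)^T *m Lhat G w I \in unitmx) x :
  (Lhat G w I)^T *m uvec G w A y lam I x = beta A y lam x.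
Proof. by rewrite /uvec !mulmxA mulmxV // mul1mx. Qed.


Lemma HC2 (HGne : forall t, exists j, j \in G t)
  (HGcov : \bigcup_(t < N) G t = [set: 'I_n]) x
  (Hu : forall t, t \notin I -> blk_norm (uvec G w A y lam I x) t <= 1)
  (d : 'cV[R]_n) (Pd : P *m d = 0) :
  dot (beta A y lam x) d <= \sum_t (if t \in I then 0 else w t * grp_norm G d t).
Proof.
set u := uvec G w A y lam I x.
set Lh := Lhat G w I.
rewrite -(uvec_eq (Lhat_unit HGne HGcov)) dot_mulmx trmxK -/u.
have Lhd : forall k, (Lh *m d) k 0 =
    if [exists s in I, inJ G s k] then 0 else (liftL G w *m d) k 0.
  move=> k; rewrite /Lh Lhat_mul.
  have -> : (1%:M - P) *m d = d by rewrite mulmxBl mul1mx Pd subr0.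
  by rewrite subE Pz_mul; case: ifP => _; rewrite ?subrr ?subr0.
have step : forall k : 'I_(lift_dim G), u k 0 * (Lh *m d) k 0 =
    \sum_t (if inJ G t k then u k 0 * (Lh *m d) k 0 else 0).
  move=> k; case: (pickP (fun t => inJ G t k)) => [t kt | none].
    rewrite (bigD1 t) //= kt big1 ?addr0 // => s st; case: ifP => // ks.
    by rewrite (inJ_uniq _ _ _ s t k ks kt) eqxx in st.
  rewrite big1 => [|s _]; last by rewrite none.
  rewrite Lhd; case: ifP => _; first by rewrite mulr0.
  by rewrite Lmul_none ?mulr0 // => t; rewrite none.
rewrite /dot (eq_bigr _ (fun k _ => step k)) exchange_big /=; apply: ler_sum => t _.
rewrite -big_mkcond /=.
have [tI|tI] := boolP (t \in I).
  by rewrite big1 // => k kt; rewrite Lhd (pz_true t k kt tI) mulr0.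
rewrite (eq_bigr (fun k => u k 0 * (liftL G w *m d) k 0)); last first.
  by move=> k kt; rewrite Lhd (pz_false t k kt tI).
apply: le_trans (CS _ _ _ _) _.
have [j0 _] := HGne t.
have hb := blk_L _ _ _ G w j0 t d (ltW (Hw t)).
rewrite /blk_norm in hb Hu; rewrite hb.
rewrite -[X in _ <= X]mul1r; apply: ler_pM; rewrite ?sqrtr_ge0 //.
  by rewrite mulr_ge0 ?sqrtr_ge0 // ltW.
exact: Hu.
Qed.

End Core.
Lemma beta_aff (R : fieldType) m n (A : 'M[R]_(m, n)) y lam x :
  beta A y lam x = (- lam^-1 *: (A^T *m A)) *m x + lam^-1 *: (A^T *m y).
Proof.
rewrite /beta mulmxBr scalerBr opprB addrC; congr (_ + _).
by rewrite -scalemxAl mulmxA scaleNr.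
Qed.

Lemma uvec_aff (R : rcfType) m n N (G : 'I_N -> {set 'I_n}) w (A : 'M[R]_(m, n)) y lam I x :
  uvec G w A y lam I x =
  ((Lhat G w I *m invmx ((Lhat G w I)^T *m Lhat G w I)) *m (- lam^-1 *: (A^T *m A))) *m x
  + (Lhat G w I *m invmx ((Lhat G w I)^T *m Lhat G w I)) *m (lam^-1 *: (A^T *m y)).
Proof. by rewrite /uvec beta_aff mulmxDr mulmxA. Qed.

Lemma sq_le (R : rcfType) (s c : R) : 0 <= c -> Num.sqrt s < c -> s <= c ^+ 2.
Proof.
move=> c0 h; case: (lerP s 0) => s0; first by apply: le_trans s0 _; exact: sqr_ge0.
rewrite -(sqr_sqrtr (ltW s0)) !expr2; apply: ler_pM; rewrite ?sqrtr_ge0 //; exact: ltW.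
Qed.
Lemma lim_sq (R : realType) p n (B : 'M[R]_(p,n)) (c : 'cV[R]_p) (S : pred 'I_p)
  (xs : nat -> 'cV[R]_n) xt (Hc : (xs @ \oo --> xt)%classic) (b : R)
  (H : (\forall k \near \oo, \sum_(j | S j) ((B *m xs k + c) j 0)^+2 <= b)%classic) :
  \sum_(j | S j) ((B *m xt + c) j 0)^+2 <= b.
Proof.
apply: (cvgr_to_le _ H).
apply: cvg_big; first exact: add_continuous.
move=> j _.
have Hj : (((B *m xs x + c) j 0) @[x --> \oo] --> ((B *m xt + c) j 0))%classic.
  rewrite !mxE.
  under eq_cvg do rewrite !mxE.
  apply: cvgD; last exact: cvg_cst.
  apply: cvg_big; first exact: add_continuous.
  move=> i _; apply: cvgMl_tmp.
  exact: (cvg_comp _ _ Hc (@coord_continuous R n 1 i 0 xt)).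
rewrite expr2; under eq_cvg do rewrite expr2.
exact: cvgM.
Qed.

Theorem proposition4p2 (R : realType) (m n N : nat)
  (G : 'I_N -> {set 'I_n}) (w : 'I_N -> R)
  (A : 'M[R]_(m, n)) (y : 'cV[R]_m) (lam : R)
  (HGne : forall t, exists j, j \in G t)
  (HGcov : \bigcup_(t < N) G t = [set: 'I_n])
  (Hw : forall t, 0 < w t) (Hlam : 0 < lam)
  (Iseq : nat -> {set 'I_N}) (xseq : nat -> 'cV[R]_n)
  (Hupd : (forall k, Iseq k.+1 = update1 G w A y lam (Iseq k) (xseq k.+1))
       \/ (forall k, Iseq k.+1 = update2 G w A y lam (Iseq k) (xseq k.+1)))
  (Ibar : {set 'I_N})
  (Hstab : exists K, forall k, (K <= k)%N -> Iseq k = Ibar)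
  (xt : 'cV[R]_n)
  (Hcvg : (xseq @ \oo --> xt)%classic)
  (Hmin : forall x : 'cV[R]_n,
     objective (A *m projT R G Ibar) (liftL G w *m projT R G Ibar) y lam xt
     <= objective (A *m projT R G Ibar) (liftL G w *m projT R G Ibar) y lam x)
  (Hzero : forall i : 'I_n, i \notin suppE G Ibar -> xt i 0 = 0) :
  forall x : 'cV[R]_n,
    objective A (liftL G w) y lam xt <= objective A (liftL G w) y lam x.
Proof.
move=> x.
set P0 := P R n N G Ibar.
have eP : projT R G Ibar = P0 by [].
have Hfix : P0 *m xt = xt.
  apply/colP => i; rewrite Pmul; case: ifP => // /negbT /Hzero ->; by [].
have Hmin' : forall z, P0 *m z = z ->
    F R m n N G w A y lam xt <= F R m n N G w A y lam z.
  move=> z Pz; rewrite -!(obj_F _ _ _ _ _ _ _ _ _ Hw HGne).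
  by have := Hmin z; rewrite /objective -!mulmxA eP Hfix Pz.
rewrite !(obj_F _ _ _ _ _ _ _ _ _ Hw HGne).
apply: (core _ _ _ _ _ _ _ _ _ _ Hw Hlam xt Hfix Hmin').
move=> d Pd.
have [K HK] := Hstab.
have stab : forall k, (K.+1 <= k)%N -> Iseq k = Ibar /\ Iseq k.-1 = Ibar.
  by move=> k hk; split; apply: HK; lia.
case: Hupd => Hup.
  apply: (HC1 _ _ _ _ _ _ _ _ _ Pd) => t tI.
  have L1 := lim_sq R n n (- lam^-1 *: (A^T *m A)) (lam^-1 *: (A^T *m y))
     (fun j => j \in G t) xseq xt Hcvg (w t ^+ 2).
  rewrite /grp_norm beta_aff -(ger0_norm (ltW (Hw t))) -sqrtr_sqr.
  apply: ler_wsqrtr; apply: L1.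
  exists K.+1 => // k /= hk.
  case: k hk => [//|k] hk.
  have [e1 e2] := stab _ hk.
  have e := Hup k; rewrite e1 /= e2 in e.
  move: tI; rewrite {1}e /update1 finset.in_setU inE negb_or => /andP [_ hlt].
  rewrite -ltNge /grp_norm beta_aff in hlt.
  exact: sq_le (ltW (Hw t)) hlt.
have HU := Lhat_unit _ _ _ _ _ _ Hw HGne HGcov.
apply: (HC2 _ _ _ _ _ _ _ _ _ _ Hw HGne HGcov xt _ d Pd) => t tI.
set Mi := Lhat G w Ibar *m invmx ((Lhat G w Ibar)^T *m Lhat G w Ibar).
have L1 := lim_sq R (lift_dim G) n (Mi *m (- lam^-1 *: (A^T *m A)))
   (Mi *m (lam^-1 *: (A^T *m y))) (fun k => inJ G t k) xseq xt Hcvg (1 ^+ 2).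
rewrite /blk_norm uvec_aff -/Mi.
apply: (le_trans (y := Num.sqrt (1 ^+ 2))); last by rewrite expr1n sqrtr1.
apply: ler_wsqrtr; apply: L1.
exists K.+1 => // k /= hk.
case: k hk => [//|k] hk.
have [e1 e2] := stab _ hk.
have e := Hup k; rewrite e1 /= e2 in e.
move: tI; rewrite {1}e /update2 finset.in_setU inE negb_or => /andP [_ hlt].
rewrite -ltNge /blk_norm uvec_aff -/Mi in hlt.
exact: sq_le ler01 hlt.
Qed.
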